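(* Let $A$ and $B$ be finite skew braces with $|A|=|B|$. If $A$ and $B$ are isoclinic, then $\Lambda(A)\cong\Lambda(B)$ and $\Theta(A)\cong\Theta(B)$ as graphs.
   Context: A skew brace is a triple $(A,+,\circ)$ where $(A,+)$ and $(A,\circ)$ are groups with $a\circ(b+c)=a\circ b-a+a\circ c$. $\lambda_a(b)=-a+a\circ b$, $a*b=\lambda_a(b)-b$, $[a,b]_+=a+b-a-b$; $\theta_{(a,b)}(c)=a+\lambda_b(c)-a$ is an action of $(A,+)\rtimes_\lambda(A,\circ)$ on $(A,+)$. $\operatorname{Soc}(A)=\ker\lambda\cap Z(A,+)$ and $\operatorname{Ann}(A)=\operatorname{Soc}(A)\cap Z(A,\circ)$ (an ideal). $A^2$ is the additive subgroup generated by all $a*b$, and $A'$ is the additive subgroup generated by $A^2$ and all $[a,b]_+$. Two skew braces $A,B$ are isoclinic if there exist a skew brace isomorphism $\xi\colon A/\operatorname{Ann}(A)\to B/\operatorname{Ann}(B)$ and a group isomorphism $\delta\colon (A',+)\to(B',+)$ such that for all $a,b\in A$ and all $a_1,b_1\in B$ with $\overline{a_1}=\xi(\overline a)$, $\overline{b_1}=\xi(\overline b)$ one has $\delta([a,b]_+)=[a_1,b_1]_+$ and $\delta(a*b)=a_1*b_1$. For a finite skew brace, $\Lambda(A)$ (resp. $\Theta(A)$) is the graph whose vertices are the $\lambda$-orbits (resp. $\theta$-orbits) of size $>1$, two distinct vertices $L_1,L_2$ adjacent iff $\gcd(|L_1|,|L_2|)\neq1$. *)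

(* Defs.v *)
From mathcomp Require Import all_boot.
Set Implicit Arguments. Unset Strict Implicit. Unset Printing Implicit Defensive.

Record skew_brace (T : finType) := SkewBrace {
  sadd : T -> T -> T;
  sopp : T -> T;
  szero : T;
  scirc : T -> T -> T;
  sinv : T -> T;
  sone : T;
  saddA : forall a b c, sadd a (sadd b c) = sadd (sadd a b) c;
  sadd0l : forall a, sadd szero a = a;
  saddNl : forall a, sadd (sopp a) a = szero;
  scircA : forall a b c, scirc a (scirc b c) = scirc (scirc a b) c;
  scirc1l : forall a, scirc sone a = a;
  scircVl : forall a, scirc (sinv a) a = sone;
  sbrace : forall a b c,
    scirc a (sadd b c) = sadd (sadd (scirc a b) (sopp a)) (scirc a c)
}.

Section Defs.
Variables (T : finType) (A : skew_brace T).

Local Notation "a + b" := (sadd A a b).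
Local Notation "- a" := (sopp A a).
Local Notation "a \o b" := (scirc A a b).

Definition lam (a b : T) : T := - a + (a \o b).
Definition sstar (a b : T) : T := lam a b + - b.
Definition acomm (a b : T) : T := a + b + - a + - b.
Definition theta (a b c : T) : T := a + lam b c + - a.

(* Ann(A) = Soc(A) cap Z(A,o), Soc(A) = ker lambda cap Z(A,+) *)
Definition Ann : {set T} :=
  [set a | [forall b, [&& lam a b == b, a + b == b + a & a \o b == b \o a]]].

(* the class of a in A/Ann(A), as a coset a + Ann(A) *)
Definition acoset (a : T) : {set T} := [set a + z | z in Ann].
Definition quot : {set {set T}} := [set acoset a | a : T].

Definition add_gen (G : {set T}) (x : T) : Prop :=
  forall S : {set T},
    szero A \in S -> (forall u v, u \in S -> v \in S -> u + v \in S) ->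
    (forall u, u \in S -> - u \in S) -> G \subset S -> x \in S.

Definition derived (x : T) : Prop :=
  add_gen [set y | [exists a, exists b, (y == sstar a b) || (y == acomm a b)]] x.

Definition lam_orbit (c : T) : {set T} := [set lam a c | a : T].
Definition theta_orbit (c : T) : {set T} := [set theta a b c | a : T, b : T].

Definition LambdaV : {set {set T}} :=
  [set lam_orbit c | c in [pred c | 1 < #|lam_orbit c|]].
Definition ThetaV : {set {set T}} :=
  [set theta_orbit c | c in [pred c | 1 < #|theta_orbit c|]].

End Defs.

Definition orb_adj (T : finType) (L1 L2 : {set T}) : bool :=
  (L1 != L2) && (gcdn #|L1| #|L2| != 1).

Definition orb_graph_iso (TA TB : finType)
    (VA : {set {set TA}}) (VB : {set {set TB}}) : Prop :=
  exists f : {set TA} -> {set TB},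
    [/\ {in VA &, injective f}, f @: VA = VB &
        {in VA &, forall L1 L2, orb_adj (f L1) (f L2) = orb_adj L1 L2}].

(* Isoclinism of skew braces.  xi is a skew brace isomorphism
   A/Ann(A) -> B/Ann(B), given on cosets; delta is a group isomorphism
   (A',+) -> (B',+), given as a map TA -> TB restricted to A'. *)
Definition isoclinic (TA TB : finType) (A : skew_brace TA) (B : skew_brace TB)
  : Prop :=
  exists (xi : {set TA} -> {set TB}) (delta : TA -> TB),
  [/\
     [/\ (forall X, X \in quot A -> xi X \in quot B),
      {in quot A &, injective xi},
      (forall Y, Y \in quot B -> exists2 X, X \in quot A & xi X = Y) &
      (forall a b a1 b1, xi (acoset A a) = acoset B a1 ->
         xi (acoset A b) = acoset B b1 ->
         xi (acoset A (sadd A a b)) = acoset B (sadd B a1 b1)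
         /\ xi (acoset A (scirc A a b)) = acoset B (scirc B a1 b1))],
      [/\ (forall x, derived A x -> derived B (delta x)),
          (forall x y, derived A x -> derived A y -> delta x = delta y -> x = y),
          (forall y, derived B y -> exists2 x, derived A x & delta x = y) &
          (forall x y, derived A x -> derived A y ->
             delta (sadd A x y) = sadd B (delta x) (delta y))] &
      (forall a b a1 b1, xi (acoset A a) = acoset B a1 ->
         xi (acoset A b) = acoset B b1 ->
         delta (acomm A a b) = acomm B a1 b1 /\
         delta (sstar A a b) = sstar B a1 b1)].

(* Main.v *)
Require Import Defs.
From mathcomp Require Import all_boot.
Set Implicit Arguments. Unset Strict Implicit. Unset Printing Implicit Defensive.

Section Grp.
Variables (G : Type) (op : G -> G -> G) (inv : G -> G) (e : G).
Hypotheses (opA : forall a b c, op a (op b c) = op (op a b) c)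
  (op1 : forall a, op e a = a) (opV : forall a, op (inv a) a = e).
Lemma g_opVr a : op a (inv a) = e.
Proof.
have h : op a (inv a) = op (op (inv (inv a)) (inv a)) (op a (inv a)) by rewrite opV op1.
by rewrite h -opA (opA (inv a) a (inv a)) opV op1 opV.
Qed.
Lemma g_op1r a : op a e = a.
Proof. by rewrite -(opV a) opA g_opVr op1. Qed.
Lemma g_opKl a b : op (inv a) (op a b) = b.
Proof. by rewrite opA opV op1. Qed.
Lemma g_opNKl a b : op a (op (inv a) b) = b.
Proof. by rewrite opA g_opVr op1. Qed.
Lemma g_opKr a b : op (op a b) (inv b) = a.
Proof. by rewrite -opA g_opVr g_op1r. Qed.
Lemma g_opNKr a b : op (op a (inv b)) b = a.
Proof. by rewrite -opA opV g_op1r. Qed.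
Lemma g_inj a : injective (op a).
Proof. by move=> x y h; rewrite -(g_opKl a x) h g_opKl. Qed.
Lemma g_injr b : injective (fun x => op x b).
Proof. by move=> x y /= h; rewrite -(g_opKr x b) h g_opKr. Qed.
Lemma g_inv_uniq a b : op a b = e -> b = inv a.
Proof. by move=> h; rewrite -(g_opKl a b) h g_op1r. Qed.
Lemma g_invK a : inv (inv a) = a.
Proof. by symmetry; apply: g_inv_uniq; rewrite opV. Qed.
Lemma g_invM a b : inv (op a b) = op (inv b) (inv a).
Proof. by symmetry; apply: g_inv_uniq; rewrite -opA (opA b) g_opVr op1 g_opVr. Qed.
Lemma g_inv1 : inv e = e.
Proof. by rewrite -[LHS]g_op1r opV. Qed.
Lemma g_comm_inv a b : op a b = op b a -> op (inv a) b = op b (inv a).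
Proof.
move=> h; rewrite -[LHS](g_opKr _ a) -(opA (inv a) b a) -h.
by rewrite g_opKl.
Qed.
End Grp.

Section SB.
Variables (T : finType) (A : skew_brace T).
Local Notation "a + b" := (sadd A a b).
Local Notation "- a" := (sopp A a).
Local Notation z0 := (szero A).
Local Notation "a \o b" := (scirc A a b).
Local Notation ginv := (sinv A).

Let AA := @saddA T A. Let A0 := @sadd0l T A. Let AN := @saddNl T A.
Let CA := @scircA T A. Let C1 := @scirc1l T A. Let CV := @scircVl T A.

Lemma addNr a : a + - a = z0. Proof. exact: g_opVr AA A0 AN a. Qed.
Lemma addr0 a : a + z0 = a. Proof. exact: g_op1r AA A0 AN a. Qed.
Lemma addKr a b : - a + (a + b) = b. Proof. exact: g_opKl AA A0 AN a b. Qed.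
Lemma addNKr a b : a + (- a + b) = b. Proof. exact: g_opNKl AA A0 AN a b. Qed.
Lemma addrK a b : (a + b) + - b = a. Proof. exact: g_opKr AA A0 AN a b. Qed.
Lemma addrNK a b : (a + - b) + b = a. Proof. exact: g_opNKr AA A0 AN a b. Qed.
Lemma addI a : injective (sadd A a). Proof. exact: g_inj AA A0 AN a. Qed.
Lemma addIr b : injective (fun x => x + b). Proof. exact: g_injr AA A0 AN b. Qed.
Lemma opp_uniq a b : a + b = z0 -> b = - a. Proof. exact: g_inv_uniq AA A0 AN a b. Qed.
Lemma oppK a : - - a = a. Proof. exact: g_invK AA A0 AN a. Qed.
Lemma oppD a b : - (a + b) = - b + - a. Proof. exact: g_invM AA A0 AN a b. Qed.
Lemma opp0 : - z0 = z0. Proof. exact: g_inv1 AA A0 AN. Qed.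
Lemma comm_opp a b : a + b = b + a -> - a + b = b + - a.
Proof. exact: g_comm_inv AA A0 AN a b. Qed.
Lemma circVr a : a \o ginv a = sone A. Proof. exact: g_opVr CA C1 CV a. Qed.
Lemma circ1r a : a \o sone A = a. Proof. exact: g_op1r CA C1 CV a. Qed.
Lemma circ_comm_inv a b : a \o b = b \o a -> ginv a \o b = b \o ginv a.
Proof. exact: g_comm_inv CA C1 CV a b. Qed.

Lemma circ0 a : a \o z0 = a.
Proof.
have := sbrace A a z0 z0; rewrite A0 => h.
have : a \o z0 + z0 = a \o z0 + (- a + (a \o z0)) by rewrite addr0 AA -h.
move/addI => h2. by rewrite -(addNKr a (a \o z0)) -h2 addr0.
Qed.
Lemma one0 : sone A = z0. Proof. by rewrite -(circ0 (sone A)) C1. Qed.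
Lemma circ0l a : z0 \o a = a. Proof. by rewrite -one0 C1. Qed.
Lemma circ1rz a : a \o ginv a = z0. Proof. by rewrite circVr one0. Qed.

Lemma lamD a b c : lam A a (b + c) = lam A a b + lam A a c.
Proof. by rewrite /lam sbrace !AA. Qed.
Lemma lam0 a : lam A a z0 = z0. Proof. by rewrite /lam circ0 AN. Qed.
Lemma lamN a b : lam A a (- b) = - lam A a b.
Proof. by apply: opp_uniq; rewrite -lamD addNr lam0. Qed.
Lemma lam1 c : lam A z0 c = c. Proof. by rewrite /lam circ0l opp0 A0. Qed.
Lemma lam_circ a b c : lam A (a \o b) c = lam A a (lam A b c).
Proof.
rewrite [lam A b c]/lam lamD lamN /lam oppD oppK CA.
by rewrite !AA addrK.
Qed.
Lemma lamV b c : lam A (ginv b) (lam A b c) = c.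
Proof. by rewrite -lam_circ CV one0 lam1. Qed.
Lemma lamVr b c : lam A b (lam A (ginv b) c) = c.
Proof. by rewrite -lam_circ circ1rz lam1. Qed.

Lemma AnnP z : reflect (forall b, [/\ lam A z b = b, z + b = b + z & z \o b = b \o z])
  (z \in Ann A).
Proof.
rewrite inE; apply: (iffP forallP) => h b.
  by case/and3P: (h b) => /eqP -> /eqP -> /eqP ->.
by case: (h b) => -> -> ->; rewrite !eqxx.
Qed.

Lemma Ann_circ z b : z \in Ann A -> z \o b = z + b.
Proof. move=> hz; have [h _ _] := (elimT (AnnP z) hz) b. by rewrite -{2}h /lam addNKr. Qed.
Lemma Ann_lam a z : z \in Ann A -> lam A a z = z.
Proof.
move=> hz; have [_ h1 h2] := (elimT (AnnP z) hz) a.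
by rewrite /lam -h2 Ann_circ // h1 addKr.
Qed.
Lemma Ann0 : z0 \in Ann A.
Proof. by apply/AnnP => b; rewrite lam1 A0 addr0 circ0 circ0l. Qed.
Lemma AnnD z w : z \in Ann A -> w \in Ann A -> z + w \in Ann A.
Proof.
move=> hz hw; apply/AnnP => b.
have [l1 p1 c1] := (elimT (AnnP _) hz) (b); have [l2 p2 c2] := (elimT (AnnP _) hw) (b).
rewrite -Ann_circ // lam_circ l2 l1; split => //.
  by rewrite Ann_circ // -!AA p2 !AA p1.
by rewrite -CA c2 !CA c1.
Qed.
Lemma AnnN z : z \in Ann A -> - z \in Ann A.
Proof.
move=> hz.
have e : ginv z = - z by apply: opp_uniq; rewrite -Ann_circ // circ1rz.
rewrite -e; apply/AnnP => b; have [l1 p1 c1] := (elimT (AnnP _) hz) (b).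
split.
- by rewrite -{1}l1 lamV.
- by rewrite e; apply: comm_opp.
- exact: circ_comm_inv.
Qed.

Lemma acosetP a x : reflect (exists2 z, z \in Ann A & x = a + z) (x \in acoset A a).
Proof. exact: (iffP imsetP). Qed.
Lemma mem_acoset a : a \in acoset A a.
Proof. by apply/acosetP; exists z0; rewrite ?addr0 ?Ann0. Qed.
Lemma acoset_eq x a : x \in acoset A a -> acoset A x = acoset A a.
Proof.
case/acosetP => z hz ->; apply/setP => y.
apply/acosetP/acosetP => -[w hw ->].
  by exists (z + w); rewrite ?AnnD ?AA.
by exists (- z + w); rewrite ?AnnD ?AnnN // -AA addNKr.
Qed.
Lemma card_acoset a : #|acoset A a| = #|Ann A|.
Proof. exact: card_imset (@addI a). Qed.

Lemma lam_orbit_refl c : c \in lam_orbit A c.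
Proof. by apply/imsetP; exists z0; rewrite ?lam1. Qed.
Lemma lam_orbit_eq c d : d \in lam_orbit A c -> lam_orbit A d = lam_orbit A c.
Proof.
case/imsetP => b _ ->; apply/setP => y; apply/imsetP/imsetP => -[a _ ->].
  by exists (a \o b); rewrite ?lam_circ.
by exists (a \o ginv b); rewrite ?lam_circ ?lamV.
Qed.
Lemma card_lam_orbit_Ann c z : z \in Ann A -> #|lam_orbit A (c + z)| = #|lam_orbit A c|.
Proof.
move=> hz.
have -> : lam_orbit A (c + z) = (fun y => y + z) @: lam_orbit A c.
  rewrite /lam_orbit; apply/setP => y; apply/imsetP/imsetP.
    by case=> a _ ->; exists (lam A a c); [apply/imsetP; exists a | rewrite lamD (Ann_lam _ hz)].
  case=> x /imsetP [a _ ->] ->.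
  by exists a; rewrite ?lamD ?(Ann_lam _ hz).
exact: card_imset (@addIr z).
Qed.
Lemma card_lam_orbit_star c : #|lam_orbit A c| = #|[set sstar A a c | a : T]|.
Proof.
have -> : [set sstar A a c | a : T] = (fun y => y + - c) @: lam_orbit A c.
  rewrite /lam_orbit; apply/setP => y; apply/imsetP/imsetP.
    by case=> a _ ->; exists (lam A a c); [apply/imsetP; exists a | ].
  case=> x /imsetP [a _ ->] ->.
  by exists a.
by rewrite card_imset //; apply: addIr.
Qed.

Lemma theta_comp a b a0 b0 c :
  theta A a b (theta A a0 b0 c) = theta A (a + lam A b a0) (b \o b0) c.
Proof. by rewrite /theta (lamD b (a0 + lam A b0 c)) (lamD b a0) lamN (lam_circ b b0 c) (oppD a (lam A b a0)) !AA. Qed.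
Lemma theta_orbit_refl c : c \in theta_orbit A c.
Proof. by apply/imset2P; exists z0 z0; rewrite // /theta lam1 A0 opp0 addr0. Qed.
Lemma theta_orbit_eq c d : d \in theta_orbit A c -> theta_orbit A d = theta_orbit A c.
Proof.
case/imset2P => a0 b0 _ _ ->; apply/setP => y.
apply/imset2P/imset2P => -[a b _ _ ->].
  by exists (a + lam A b a0) (b \o b0); rewrite ?theta_comp.
exists (a + - lam A (b \o ginv b0) a0) (b \o ginv b0) => //.
by rewrite theta_comp addrNK -CA CV circ1r.
Qed.
Lemma card_theta_orbit_Ann c z : z \in Ann A ->
  #|theta_orbit A (c + z)| = #|theta_orbit A c|.
Proof.
move=> hz.
have th : forall a b, theta A a b (c + z) = theta A a b c + z.
  move=> a b; have [_ p _] := (elimT (AnnP _) hz) (- a).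
  by rewrite /theta lamD (Ann_lam _ hz) -!AA p.
have -> : theta_orbit A (c + z) = (fun y => y + z) @: theta_orbit A c.
  rewrite /theta_orbit; apply/setP => y; apply/imset2P/imsetP.
    by case=> a b _ _ ->; exists (theta A a b c); [apply/imset2P; exists a b | rewrite th].
  case=> x /imset2P [a b _ _ ->] ->.
  by exists a b; rewrite ?th.
exact: card_imset (@addIr z).
Qed.
Lemma theta_dec a b c : theta A a b c + - c = acomm A a (lam A b c) + sstar A b c.
Proof. by rewrite /acomm /sstar /theta; move: (lam A b c) => y; rewrite !AA addrNK. Qed.
Lemma card_theta_orbit_dec c : #|theta_orbit A c| =
  #|[set acomm A a (lam A b c) + sstar A b c | a : T, b : T]|.
Proof.
have -> : [set acomm A a (lam A b c) + sstar A b c | a : T, b : T] =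
   (fun y => y + - c) @: theta_orbit A c.
  rewrite /theta_orbit; apply/setP => y; apply/imset2P/imsetP.
    by case=> a b _ _ ->; exists (theta A a b c); [apply/imset2P; exists a b | rewrite theta_dec].
  case=> x /imset2P [a b _ _ ->] ->.
  by exists a b; rewrite ?theta_dec.
by rewrite card_imset //; apply: addIr.
Qed.

Lemma add_genD G x y : add_gen A G x -> add_gen A G y -> add_gen A G (x + y).
Proof. by move=> hx hy S h0 hD hN hG; exact: hD (hx S h0 hD hN hG) (hy S h0 hD hN hG). Qed.
Lemma derived_star a b : derived A (sstar A a b).
Proof.
move=> S _ _ _ /subsetP; apply; rewrite inE.
by apply/existsP; exists a; apply/existsP; exists b; rewrite eqxx.
Qed.
Lemma derived_comm a b : derived A (acomm A a b).
Proof.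
move=> S _ _ _ /subsetP; apply; rewrite inE.
by apply/existsP; exists a; apply/existsP; exists b; rewrite eqxx orbT.
Qed.

End SB.

Lemma part_orbits (T : finType) (O : T -> {set T}) (D : {set T}) :
  (forall c, c \in O c) -> (forall c d, d \in O c -> O d = O c) ->
  (forall c d, d \in O c -> (c \in D) = (d \in D)) -> partition (O @: D) D.
Proof.
move=> refl oeq cl; apply/and3P; split.
- apply/eqP/setP => x; apply/bigcupP/idP.
    by case=> _ /imsetP [c Dc ->] xc; rewrite -(cl _ _ xc).
  by move=> Dx; exists (O x); [apply: imset_f | apply: refl].
- apply/trivIsetP => _ _ /imsetP [c _ ->] /imsetP [d _ ->] neq.
  apply: contraR neq => /pred0Pn [z /andP [zc zd]].
  by rewrite -(oeq _ _ zc) -(oeq _ _ zd).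
- by apply/imsetP => -[c _ h]; have := refl c; rewrite -h inE.
Qed.

Lemma count_orbits (T : finType) (O : T -> {set T}) (k : nat) :
  (forall c, c \in O c) -> (forall c d, d \in O c -> O d = O c) ->
  #|[set c | #|O c| == k]| = #|O @: [set c | #|O c| == k]| * k.
Proof.
move=> refl oeq; apply: card_uniform_partition.
  by move=> B /imsetP [c]; rewrite inE => /eqP hk ->.
by apply: part_orbits => // c d /oeq h; rewrite !inE h.
Qed.

Lemma count_classes (T : finType) (A : skew_brace T) (s : T -> nat) k :
  (forall c d, d \in acoset A c -> s d = s c) ->
  #|[set c | s c == k]| = #|acoset A @: [set c | s c == k]| * #|Ann A|.
Proof.
move=> hs; apply: card_uniform_partition.
  by move=> B /imsetP [c _ ->]; apply: card_acoset.
apply: part_orbits => //; first exact: mem_acoset.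
  by move=> c d; apply: acoset_eq.
by move=> c d /hs h; rewrite !inE h.
Qed.

Lemma card_T_classes (T : finType) (A : skew_brace T) :
  #|T| = #|quot A| * #|Ann A|.
Proof.
have := @count_classes _ A (fun _ => 0) 0 (fun _ _ _ => erefl).
have -> : [set c : T | 0 == 0] = setT by apply/setP => x; rewrite !inE.
rewrite cardsT => ->; congr (_ * _); apply: eq_card => X.
by apply/imsetP/imsetP => -[a _ ->]; exists a.
Qed.

Section Cross.
Variables (TA TB : finType) (A : skew_brace TA) (B : skew_brace TB).
Variables (xi : {set TA} -> {set TB}) (delta : TA -> TB).
Hypothesis xi_quot : forall X, X \in quot A -> xi X \in quot B.
Hypothesis xi_inj : {in quot A &, injective xi}.
Hypothesis xi_surj : forall Y, Y \in quot B -> exists2 X, X \in quot A & xi X = Y.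
Hypothesis xi_hom : forall a b a1 b1, xi (acoset A a) = acoset B a1 ->
         xi (acoset A b) = acoset B b1 ->
         xi (acoset A (sadd A a b)) = acoset B (sadd B a1 b1)
         /\ xi (acoset A (scirc A a b)) = acoset B (scirc B a1 b1).
Hypothesis d_inj : forall x y, derived A x -> derived A y -> delta x = delta y -> x = y.
Hypothesis d_add : forall x y, derived A x -> derived A y ->
             delta (sadd A x y) = sadd B (delta x) (delta y).
Hypothesis compat : forall a b a1 b1, xi (acoset A a) = acoset B a1 ->
         xi (acoset A b) = acoset B b1 ->
         delta (acomm A a b) = acomm B a1 b1 /\
         delta (sstar A a b) = sstar B a1 b1.

Lemma quot_mem (T : finType) (C : skew_brace T) a : acoset C a \in quot C.
Proof. by apply/imsetP; exists a. Qed.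

Lemma xi_rep a : exists a1, xi (acoset A a) = acoset B a1.
Proof. by have /imsetP [a1 _ ->] := xi_quot (quot_mem A a); exists a1. Qed.
Lemma xi_pre a1 : exists a, xi (acoset A a) = acoset B a1.
Proof. by have [X /imsetP [a _ ->] h] := xi_surj (quot_mem B a1); exists a. Qed.

Lemma xi_opp b b1 : xi (acoset A b) = acoset B b1 ->
  xi (acoset A (sopp A b)) = acoset B (sopp B b1).
Proof.
move=> hb; have [x hx] := xi_rep (sopp A b).
have [h _] := xi_hom hx hb; rewrite saddNl in h.
have [e he] := xi_rep (szero A).
have [h0 _] := xi_hom he he; rewrite sadd0l he in h0.
have eAnn : e \in Ann B.
  have := mem_acoset B (sadd B e e); rewrite -h0 => /acosetP [w hw /addI ->] //.
have he0 : acoset B e = acoset B (szero B).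
  by apply: acoset_eq; apply/acosetP; exists e; rewrite ?sadd0l.
rewrite he he0 in h.
have : sadd B x b1 \in acoset B (szero B) by rewrite h mem_acoset.
case/acosetP => w hw; rewrite sadd0l => hxw.
rewrite hx; apply: acoset_eq; apply/acosetP; exists w => //.
have [_ p _] := elimT (AnnP B w) hw (sopp B b1).
by rewrite -p -hxw addrK.
Qed.

Lemma xi_lam b c b1 c1 : xi (acoset A b) = acoset B b1 -> xi (acoset A c) = acoset B c1 ->
  xi (acoset A (lam A b c)) = acoset B (lam B b1 c1).
Proof.
move=> hb hc; have [_ hcirc] := xi_hom hb hc; have hn := xi_opp hb.
by have [h _] := xi_hom hn hcirc; exact: h.
Qed.

Lemma lam_size c c1 : xi (acoset A c) = acoset B c1 ->
  #|lam_orbit A c| = #|lam_orbit B c1|.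
Proof.
move=> hc; rewrite !card_lam_orbit_star.
have -> : [set sstar B a1 c1 | a1 : TB] = delta @: [set sstar A a c | a : TA].
  apply/setP => y; apply/imsetP/imsetP.
    case=> a1 _ ->; have [a ha] := xi_pre a1.
    exists (sstar A a c); first by apply/imsetP; exists a.
    by have [_ ->] := compat ha hc.
  case=> x /imsetP [a _ ->] ->; have [a1 ha] := xi_rep a.
  by exists a1 => //; have [_ ->] := compat ha hc.
rewrite card_in_imset // => x y /imsetP [a _ ->] /imsetP [b _ ->].
by apply: d_inj; apply: derived_star.
Qed.

Lemma theta_size c c1 : xi (acoset A c) = acoset B c1 ->
  #|theta_orbit A c| = #|theta_orbit B c1|.
Proof.
move=> hc; rewrite !card_theta_orbit_dec.
have key : forall a b a1 b1, xi (acoset A a) = acoset B a1 ->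
    xi (acoset A b) = acoset B b1 ->
    delta (sadd A (acomm A a (lam A b c)) (sstar A b c)) =
    sadd B (acomm B a1 (lam B b1 c1)) (sstar B b1 c1).
  move=> a b a1 b1 ha hb.
  rewrite d_add; [| exact: derived_comm | exact: derived_star].
  have hl := xi_lam hb hc.
  by have [-> _] := compat ha hl; have [_ ->] := compat hb hc.
match goal with |- #|?S1| = #|?S2| => transitivity #|delta @: S1| end.
  rewrite card_in_imset // => x y /imset2P [a b _ _ ->] /imset2P [a' b' _ _ ->].
  by apply: d_inj; apply: add_genD; (apply: derived_comm || apply: derived_star).
apply: eq_card => y; apply/imsetP/imset2P.
  case=> x /imset2P [a b _ _ ->] ->; have [a1 ha] := xi_rep a; have [b1 hb] := xi_rep b.
  by exists a1 b1 => //; rewrite (key _ _ _ _ ha hb).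
case=> a1 b1 _ _ ->; have [a ha] := xi_pre a1; have [b hb] := xi_pre b1.
exists (sadd A (acomm A a (lam A b c)) (sstar A b c)); last by rewrite (key _ _ _ _ ha hb).
by apply/imset2P; exists a b.
Qed.

Lemma ann_card_eq : #|TA| = #|TB| -> #|Ann A| = #|Ann B|.
Proof.
move=> hT.
have hq : #|quot B| = #|quot A|.
  have -> : quot B = xi @: quot A.
    apply/setP => Y; apply/idP/imsetP.
      by case/xi_surj => X hX <-; exists X.
    by case=> X hX ->; apply: xi_quot.
  exact: card_in_imset.
have := card_T_classes A; have := card_T_classes B.
rewrite -hT hq => ->; move/eqP; rewrite eqn_mul2l => /orP [/eqP q0|/eqP //].
by have := card0_eq q0 (acoset A (szero A)); rewrite quot_mem inE.
Qed.

Lemma count_transfer (sA : TA -> nat) (sB : TB -> nat) k :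
  #|TA| = #|TB| ->
  (forall c d, d \in acoset A c -> sA d = sA c) ->
  (forall c d, d \in acoset B c -> sB d = sB c) ->
  (forall c c1, xi (acoset A c) = acoset B c1 -> sA c = sB c1) ->
  #|[set c | sA c == k]| = #|[set c | sB c == k]|.
Proof.
move=> hT hA hB hAB.
rewrite (count_classes _ hA) (count_classes _ hB) (ann_card_eq hT).
congr (_ * _).
have -> : acoset B @: [set c | sB c == k] = xi @: (acoset A @: [set c | sA c == k]).
  apply/setP => Y; apply/imsetP/imsetP.
    case=> c1; rewrite inE => hk ->; have [c hc] := xi_pre c1.
    exists (acoset A c); last by [].
    by apply/imsetP; exists c; rewrite // inE (hAB _ _ hc).
  case=> _ /imsetP [c hk ->] ->; have [c1 hc] := xi_rep c.
  by exists c1 => //; move: hk; rewrite !inE (hAB _ _ hc).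
rewrite [RHS]card_in_imset // => X Y /imsetP [a _ ->] /imsetP [b _ ->].
by apply: xi_inj; apply: quot_mem.
Qed.

End Cross.

Lemma graph_iso (TA TB : finType) (VA : {set {set TA}}) (VB : {set {set TB}}) :
  (forall k, #|[set L in VA | #|L| == k]| = #|[set L in VB | #|L| == k]|) ->
  orb_graph_iso VA VB.
Proof.
move=> hk.
pose SA (k : nat) := enum [set L in VA | #|L| == k].
pose SB (k : nat) := enum [set L in VB | #|L| == k].
pose f (L : {set TA}) := nth set0 (SB #|L|) (index L (SA #|L|)).
have szA k : size (SA k) = #|[set L in VA | #|L| == k]| by rewrite -cardE.
have szB k : size (SB k) = #|[set L in VB | #|L| == k]| by rewrite -cardE.
have memA L : L \in VA -> L \in SA #|L| by move=> hL; rewrite mem_enum inE hL eqxx.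
have fP L : L \in VA -> f L \in SB #|L|.
  move=> hL; apply: mem_nth; rewrite szB -hk -szA index_mem; exact: memA.
have fV L : L \in VA -> f L \in VB by move/fP; rewrite mem_enum inE => /andP [].
have fc L : L \in VA -> #|f L| = #|L| by move/fP; rewrite mem_enum inE => /andP [_ /eqP].
have finj : {in VA &, injective f}.
  move=> L1 L2 h1 h2 e.
  have ec : #|L1| = #|L2| by rewrite -fc // e fc.
  move: e; rewrite /f ec => /eqP; rewrite nth_uniq ?enum_uniq //.
  - by move/eqP => e; rewrite -(nth_index set0 (memA _ h1)) ec e nth_index //; apply: memA.
  - by rewrite szB -hk -szA index_mem -ec; apply: memA.
  - by rewrite szB -hk -szA index_mem; apply: memA.
exists f; split => //.
  apply/setP => M; apply/imsetP/idP; first by case=> L hL ->; apply: fV.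
  move=> hM; pose k := #|M|.
  have hMi : index M (SB k) < size (SB k) by rewrite index_mem mem_enum inE hM eqxx.
  have hLi : index M (SB k) < size (SA k) by rewrite szA hk -szB.
  pose L := nth set0 (SA k) (index M (SB k)).
  have LS : L \in SA k by apply: mem_nth.
  move: (LS); rewrite mem_enum inE => /andP [hL /eqP hLk].
  exists L => //; rewrite /f hLk index_uniq ?enum_uniq // nth_index //.
  by rewrite mem_enum inE hM eqxx.
move=> L1 L2 h1 h2; rewrite /orb_adj (inj_in_eq finj) // !fc //.
Qed.

Lemma Vcount (T : finType) (O : T -> {set T}) k : 1 < k ->
  (forall c, c \in O c) -> (forall c d, d \in O c -> O d = O c) ->
  #|[set L in [set O c | c in [pred c | 1 < #|O c|]] | #|L| == k]| * k
  = #|[set c | #|O c| == k]|.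
Proof.
move=> hk refl oeq; rewrite (count_orbits k refl oeq); congr (_ * _).
apply: eq_card => L; rewrite !inE; apply/andP/imsetP.
  case=> /imsetP [c hc ->] /eqP hc2; exists c => //; by rewrite inE hc2.
case=> c; rewrite inE => /eqP hc ->; split; last by rewrite hc.
by apply/imsetP; exists c; rewrite // inE hc.
Qed.

Lemma Vcount0 (T : finType) (O : T -> {set T}) k : k <= 1 ->
  #|[set L in [set O c | c in [pred c | 1 < #|O c|]] | #|L| == k]| = 0.
Proof.
move=> hk; apply/eqP; rewrite cards_eq0; apply/eqP/setP => L; rewrite !inE.
apply/negP => /andP [/imsetP [c hc ->] /eqP hc2].
by move: hc; rewrite inE hc2 ltnNge hk.
Qed.

Theorem mainTheorem8 (TA TB : finType) (A : skew_brace TA) (B : skew_brace TB) :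
  #|TA| = #|TB| -> isoclinic A B ->
  orb_graph_iso (LambdaV A) (LambdaV B) /\ orb_graph_iso (ThetaV A) (ThetaV B).
Proof.
move=> hT [xi [delta [[xq xinj xsurj xhom] [dd dinj dsurj dadd] compat]]].
split; apply: graph_iso => k; (case: (leqP k 1) => hk;
  [by rewrite /LambdaV /ThetaV !Vcount0 | apply/eqP; rewrite -(eqn_pmul2r (ltnW hk)); apply/eqP]).
- rewrite /LambdaV (Vcount hk (@lam_orbit_refl _ A) (@lam_orbit_eq _ A)).
  rewrite (Vcount hk (@lam_orbit_refl _ B) (@lam_orbit_eq _ B)).
  apply: (count_transfer xq xinj xsurj) => //.
  + by move=> c d /acosetP [z hz ->]; apply: card_lam_orbit_Ann.
  + by move=> c d /acosetP [z hz ->]; apply: card_lam_orbit_Ann.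
  + by move=> c c1; apply: (lam_size xq xsurj dinj compat).
- rewrite /ThetaV (Vcount hk (@theta_orbit_refl _ A) (@theta_orbit_eq _ A)).
  rewrite (Vcount hk (@theta_orbit_refl _ B) (@theta_orbit_eq _ B)).
  apply: (count_transfer xq xinj xsurj) => //.
  + by move=> c d /acosetP [z hz ->]; apply: card_theta_orbit_Ann.
  + by move=> c d /acosetP [z hz ->]; apply: card_theta_orbit_Ann.
  + by move=> c c1; apply: (theta_size xq xsurj xhom dinj dadd compat).
Qed.
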